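(* Let $A$ be a Banach lattice algebra. Then $BP_l(A)\cap BP_r(A)\subseteq BP(A)$, and the sets $BP(A)$, $BP_l(A)$, $BP_r(A)$ are norm closed. If moreover $A$ has an identity $e$, then $BP_l(A)=OI(A)=BP_r(A)$; in particular $OI(A)\subseteq BP(A)$.
   Context: A Banach lattice algebra is a real Banach lattice $A$ with an associative bilinear product making it a Banach algebra such that $xy\ge0$ whenever $x,y\ge0$; identity $e$ means a multiplicative identity with $\|e\|=1$. $L_a(x)=ax$, $R_a(x)=xa$. A band projection on a Banach lattice $X$ is an operator $P$ with $P^2=P$, $0\le P\le I_X$. $BP(A)=\{a\in A_+: L_aR_a\text{ is a band projection}\}$, $BP_l(A)=\{a\in A_+: L_a\text{ is a band projection}\}$, $BP_r(A)=\{a\in A_+: R_a\text{ is a band projection}\}$, $OI(A)=\{p: p^2=p,\ 0\le p\le e\}$. *)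

(* Defs.v *)
From HB Require Import structures.
From mathcomp Require Import all_boot all_order all_algebra.
From mathcomp Require Import all_classical all_reals all_analysis.
Set Implicit Arguments. Unset Strict Implicit. Unset Printing Implicit Defensive.
Import Order.TTheory GRing.Theory Num.Theory.
Import numFieldNormedType.Exports.
Local Open Scope classical_set_scope.
Local Open Scope ring_scope.

Section BLA.
Variables (R : realType) (V : completeNormedModType R).
Variables (le : V -> V -> Prop) (join : V -> V -> V) (mul : V -> V -> V).

Definition vector_lattice : Prop :=
  [/\ [/\ (forall x, le x x),
      (forall x y, le x y -> le y x -> x = y) &
      (forall x y z, le x y -> le y z -> le x z)],
      (forall x y z, le x y -> le (x + z) (y + z)),
      (forall (a : R) x y, 0 <= a -> le x y -> le (a *: x) (a *: y)) &
      (forall x y, [/\ le x (join x y), le y (join x y) &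
                    forall z, le x z -> le y z -> le (join x y) z])].

Definition labs (x : V) : V := join x (- x).

(* Banach lattice: completeness comes from the type V *)
Definition banach_lattice : Prop :=
  vector_lattice /\ (forall x y, le (labs x) (labs y) -> `|x| <= `|y|).

Definition banach_lattice_algebra : Prop :=
  [/\ banach_lattice,
      (forall x y z, mul x (mul y z) = mul (mul x y) z),
      [/\
      (forall x y z, mul (x + y) z = mul x z + mul y z),
      (forall x y z, mul x (y + z) = mul x y + mul x z) &
      (forall (a : R) x y, mul (a *: x) y = a *: mul x y /\ mul x (a *: y) = a *: mul x y)],
      (forall x y, `|mul x y| <= `|x| * `|y|) &
      (forall x y, le 0 x -> le 0 y -> le 0 (mul x y))].

Definition is_identity (e : V) : Prop :=
  (forall x, mul e x = x /\ mul x e = x) /\ `|e| = 1.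

Definition band_projection (P : V -> V) : Prop :=
  [/\ (forall x y, P (x + y) = P x + P y),
      (forall (a : R) x, P (a *: x) = a *: P x),
      (forall x, P (P x) = P x) &
      (forall x, le 0 x -> le 0 (P x) /\ le (P x) x)].

Definition Lmul (a : V) : V -> V := fun x => mul a x.
Definition Rmul (a : V) : V -> V := fun x => mul x a.

Definition BP : set V :=
  [set a | le 0 a /\ band_projection (Lmul a \o Rmul a)].
Definition BPl : set V := [set a | le 0 a /\ band_projection (Lmul a)].
Definition BPr : set V := [set a | le 0 a /\ band_projection (Rmul a)].
Definition OI (e : V) : set V :=
  [set p | mul p p = p /\ le 0 p /\ le p e].

End BLA.

(* Main.v *)
Require Import Defs.
From HB Require Import structures.
From mathcomp Require Import all_boot all_order all_algebra.
From mathcomp Require Import all_classical all_reals all_analysis.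
From mathcomp Require Import ring lra.
Import Order.TTheory GRing.Theory Num.Theory.
Import numFieldNormedType.Exports.
Local Open Scope classical_set_scope.
Local Open Scope ring_scope.

Lemma zid (W : zmodType) (zn u a wn w v : W) : zn + u - a - (wn + w) = zn - a - wn + (u - (w + v)) + v.
Proof.
rewrite [- (w + v)]opprD -!addrA; congr (_ + _).
rewrite addNr addr0 opprD.
rewrite addrC -!addrA; congr (_ + _).
by rewrite [- w + u]addrC.
Qed.

Section S.
Variables (R : realType) (V : completeNormedModType R).
Variables (le : V -> V -> Prop) (join : V -> V -> V) (mul : V -> V -> V).
Hypothesis H : banach_lattice_algebra le join mul.

Ltac dH := move: H; rewrite /banach_lattice_algebra /banach_lattice /vector_lattice.
Let lrefl x : le x x. Proof. by dH => -[[[[r an t] ad sc j] n] ma [dl dr s] nm p]. Qed.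
Let lanti {x y} : le x y -> le y x -> x = y. Proof. by dH => -[[[[r an t] ad sc j] n] ma [dl dr s] nm p]; apply: an. Qed.
Let ltrans {x y z} : le x y -> le y z -> le x z. Proof. by dH => -[[[[r an t] ad sc j] n] ma [dl dr s] nm p]; apply: t. Qed.
Let ladd {x y} z : le x y -> le (x + z) (y + z). Proof. by dH => -[[[[r an t] ad sc j] n] ma [dl dr s] nm p]; apply: ad. Qed.
Let lscale (a : R) {x y} : 0 <= a -> le x y -> le (a *: x) (a *: y). Proof. by dH => -[[[[r an t] ad sc j] n] ma [dl dr s] nm p]; apply: sc. Qed.
Let ljoin x y : [/\ le x (join x y), le y (join x y) &
                    forall z, le x z -> le y z -> le (join x y) z]. Proof. by dH => -[[[[r an t] ad sc j] n] ma [dl dr s] nm p]. Qed.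
Let lnorm {x y} : le (labs join x) (labs join y) -> `|x| <= `|y|. Proof. by dH => -[[[[r an t] ad sc j] n] ma [dl dr s] nm p]; apply: n. Qed.
Let massoc x y z : mul x (mul y z) = mul (mul x y) z. Proof. by dH => -[[[[r an t] ad sc j] n] ma [dl dr s] nm p]. Qed.
Let mdl x y z : mul (x + y) z = mul x z + mul y z. Proof. by dH => -[[[[r an t] ad sc j] n] ma [dl dr s] nm p]. Qed.
Let mdr x y z : mul x (y + z) = mul x y + mul x z. Proof. by dH => -[[[[r an t] ad sc j] n] ma [dl dr s] nm p]. Qed.
Let msl (a : R) x y : mul (a *: x) y = a *: mul x y. Proof. by dH => -[[[[r an t] ad sc j] n] ma [dl dr s] nm p]; case: (s a x y). Qed.
Let msr (a : R) x y : mul x (a *: y) = a *: mul x y. Proof. by dH => -[[[[r an t] ad sc j] n] ma [dl dr s] nm p]; case: (s a x y). Qed.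
Let mnorm x y : `|mul x y| <= `|x| * `|y|. Proof. by dH => -[[[[r an t] ad sc j] n] ma [dl dr s] nm p]. Qed.
Let mpos {x y} : le 0 x -> le 0 y -> le 0 (mul x y). Proof. by dH => -[[[[r an t] ad sc j] n] ma [dl dr s] nm p]; apply: p. Qed.

Lemma le_sub0 x y : le x y <-> le 0 (y - x).
Proof.
split=> h; first by have := ladd (- x) h; rewrite subrr.
by have := ladd x h; rewrite add0r subrK.
Qed.

Lemma le_addlr {x y} z : le x y -> le (z + x) (z + y).
Proof. by move=> h; rewrite ![z + _]addrC; exact: ladd. Qed.

Lemma le_add2 {x y x' y'} : le x y -> le x' y' -> le (x + x') (y + y').
Proof. by move=> h h'; apply: ltrans (ladd _ h) (le_addlr _ h'). Qed.

Lemma le_opp0 {x} : le 0 x -> le (- x) 0.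
Proof. by move=> h; have := ladd (- x) h; rewrite add0r subrr. Qed.

Lemma join_ge {x y} : le y x -> join x y = x.
Proof.
move=> h; case: (ljoin x y) => h1 h2 h3; apply: lanti => //; exact: h3.
Qed.

Lemma labs_pos {x} : le 0 x -> labs join x = x.
Proof. by move=> h; rewrite /labs join_ge //; exact: ltrans (le_opp0 h) h. Qed.

Lemma labs_ge0 x : le 0 (labs join x).
Proof.
case: (ljoin x (- x)) => h1 h2 _.
have := le_add2 h1 h2; rewrite subrr => h.
have h2' : (0:R) <= 2^-1 by rewrite invr_ge0.
have := lscale _ h2' h; rewrite scaler0.
suff -> : 2^-1 *: (labs join x + labs join x) = labs join x by [].
have -> : labs join x + labs join x = 2 *: labs join x by rewrite scaler_nat mulr2n.
by rewrite scalerA mulVf ?scale1r // pnatr_eq0.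
Qed.

Lemma labs_labs x : labs join (labs join x) = labs join x.
Proof. exact: labs_pos (labs_ge0 x). Qed.

Lemma norm_labs x : `|labs join x| = `|x|.
Proof.
apply/eqP; rewrite eq_le; apply/andP; split; apply: lnorm; rewrite ?labs_labs; exact: lrefl.
Qed.

Lemma norm_mono {x y} : le 0 x -> le x y -> `|x| <= `|y|.
Proof.
move=> h0 h; apply: lnorm; rewrite !labs_pos //; exact: ltrans h0 h.
Qed.

Lemma cone_approx x : (forall eps : R, 0 < eps -> exists p, le 0 p /\ `|x - p| < eps) -> le 0 x.
Proof.
move=> hx; set y := join (- x) 0.
have yle : forall p, le 0 p -> `|y| <= `|x - p|.
  move=> p hp; rewrite (distrC x p) -[`|p - x|]norm_labs.
  case: (ljoin (-x) 0) => _ y0 yl; apply: (norm_mono y0); apply: yl; last exact: labs_ge0.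
  case: (ljoin (p - x) (-(p - x))) => hh _ _; apply: (ltrans _ hh).
  by have := ladd (- x) hp; rewrite add0r.
have y0 : `|y| = 0.
  apply/eqP; rewrite eq_le normr_ge0 andbT leNgt; apply/negP => hy.
  have [p [hp hlt]] := hx _ hy.
  by have := le_lt_trans (yle _ hp) hlt; rewrite ltxx.
move/normr0_eq0: y0 => y0.
case: (ljoin (-x) 0) => h1 _ _; rewrite -/y y0 in h1.
by have := ladd x h1; rewrite addNr add0r.
Qed.
Lemma mulNl x y : mul (- x) y = - mul x y.
Proof. by rewrite -scaleN1r msl scaleN1r. Qed.
Lemma mulNr x y : mul x (- y) = - mul x y.
Proof. by rewrite -scaleN1r msr scaleN1r. Qed.
Lemma mulBl x u y : mul (x - u) y = mul x y - mul u y.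
Proof. by rewrite mdl mulNl. Qed.
Lemma mulBr x y v : mul x (y - v) = mul x y - mul x v.
Proof. by rewrite mdr mulNr. Qed.

Lemma mul_cvg {T} {F : set_system T} {FF : Filter F} (f g : T -> V) x y :
  f @ F --> x -> g @ F --> y -> (fun z => mul (f z) (g z)) @ F --> mul x y.
Proof.
move=> /cvgrPdist_lt hf /cvgrPdist_lt hg; apply/cvgrPdist_lt => e e0.
set M := 1 + `|x| + `|y|.
have M0 : 0 < M by rewrite /M -addrA ltr_pwDl // addr_ge0.
set d := Num.min 1 (e / M).
have d0 : 0 < d by rewrite lt_min ltr01 divr_gt0.
have d1 : d <= 1 by rewrite ge_min lexx.
have dM : d * M <= e by rewrite -ler_pdivlMr // ge_min lexx orbT.
apply: filterS2 (hf d d0) (hg d d0) => z ha hb.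
have -> : mul x y - mul (f z) (g z) = mul (x - f z) y + mul (f z) (y - g z).
  by rewrite mulBl mulBr addrA subrK.
have hu : `|f z| <= `|x| + 1.
  have -> : f z = x - (x - f z) by rewrite opprB addrC subrK.
  apply: le_trans (ler_normB _ _) _; rewrite lerD2l; exact: ltW (lt_le_trans ha d1).
apply: le_lt_trans (ler_normD _ _) _.
have h1 : `|mul (x - f z) y| <= d * `|y|.
  apply: le_trans (mnorm _ _) _; apply: ler_wpM2r => //; exact: ltW.
have h2 : `|mul (f z) (y - g z)| < (`|x| + 1) * d.
  apply: le_lt_trans (mnorm _ _) _.
  apply: le_lt_trans (ler_wpM2r (normr_ge0 _) hu) _.
  by rewrite ltr_pM2l // ltr_pwDr.
apply: lt_le_trans dM; rewrite /M.
have -> : d * (1 + `|x| + `|y|) = d * `|y| + (`|x| + 1) * d by ring.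
exact: ler_ltD.
Qed.
Lemma cone_closed : closed [set x | le 0 x].
Proof.
move=> x hx; apply: cone_approx => eps e0.
have [p [hp hb]] := hx _ (nbhsx_ballx x eps e0).
by exists p; split => //; move: hb; rewrite -ball_normE.
Qed.

Lemma closure_le0 (A : set V) (f : V -> V) : continuous f ->
  (forall a, A a -> le 0 (f a)) -> forall a, closure A a -> le 0 (f a).
Proof.
move=> fc hA a ha.
have cl : closed (f @^-1` [set x | le 0 x]).
  by apply: preimage_closed; [move=> z _; exact: fc | exact: cone_closed].
by apply: cl; apply: closureS ha => b /hA.
Qed.

Lemma closure_eq (A : set V) (f g : V -> V) : continuous f -> continuous g ->
  (forall a, A a -> f a = g a) -> forall a, closure A a -> f a = g a.
Proof.
move=> fc gc hA a ha; apply: lanti; apply/le_sub0.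
- apply: (@closure_le0 A (fun a => g a - f a) _ _ a ha).
    by move=> b; apply: cvgB; [exact: gc | exact: fc].
  by move=> b /hA ->; rewrite subrr; exact: lrefl.
- apply: (@closure_le0 A (fun a => f a - g a) _ _ a ha).
    by move=> b; apply: cvgB; [exact: fc | exact: gc].
  by move=> b /hA ->; rewrite subrr; exact: lrefl.
Qed.
Lemma closed_BPgen (T : V -> V -> V) :
  (forall x, continuous (fun b => T b x)) ->
  (forall x, continuous (fun b => T b (T b x))) ->
  (forall b x y, T b (x + y) = T b x + T b y) ->
  (forall b (c : R) x, T b (c *: x) = c *: T b x) ->
  closed [set a | le 0 a /\ band_projection le (T a)].
Proof.
move=> c1 c2 ad sc a ha; split.
  apply: (@closure_le0 _ id _ _ a ha); first by move=> b; exact: cvg_id.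
  by move=> b [].
split => //.
  move=> x; apply: (@closure_eq _ (fun b => T b (T b x)) (fun b => T b x) (c2 x) (c1 x) _ a ha).
  by move=> b [_ [_ _ h _]]; exact: h.
move=> x hx; split.
  apply: (@closure_le0 _ (fun b => T b x) (c1 x) _ a ha).
  by move=> b [_ [_ _ _ /(_ x hx) []]].
apply/le_sub0; apply: (@closure_le0 _ (fun b => x - T b x) _ _ a ha).
  by move=> b; apply: cvgB; [exact: cvg_cst | exact: c1].
by move=> b [_ [_ _ _ /(_ x hx) [_ /le_sub0]]].
Qed.

Lemma cont_mul (f g : V -> V) : continuous f -> continuous g -> continuous (fun b => mul (f b) (g b)).
Proof. by move=> fc gc b; apply: mul_cvg; [exact: fc | exact: gc]. Qed.

Lemma cont_id : continuous (fun b : V => b).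
Proof. by move=> b; exact: cvg_id. Qed.
Lemma cont_cst (x : V) : continuous (fun b : V => x).
Proof. by move=> b; exact: cvg_cst. Qed.

Ltac cont := repeat first [apply: cont_mul | exact: cont_id | exact: cont_cst].

Lemma BPl_closed : closed (BPl le mul).
Proof.
apply: closed_BPgen; rewrite /Lmul => *; [cont|cont|exact: mdr|exact: msr].
Qed.
Lemma BPr_closed : closed (BPr le mul).
Proof.
apply: closed_BPgen; rewrite /Rmul => *; [cont|cont|exact: mdl|exact: msl].
Qed.
Lemma BP_closed : closed (BP le mul).
Proof.
apply: closed_BPgen; rewrite /Lmul /Rmul /= => *; [cont|cont|by rewrite mdl mdr|by rewrite msl msr].
Qed.
Lemma BPlr_sub : BPl le mul `&` BPr le mul `<=` BP le mul.
Proof.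
move=> a [[a0 [_ _ li lp]] [_ [_ _ ri rp]]]; split => //; split.
- by move=> x y; rewrite /= /Lmul /Rmul mdl mdr.
- by move=> c x; rewrite /= /Lmul /Rmul msl msr.
- move=> x; rewrite /= /Lmul /Rmul.
  have hl := li; have hr := ri; rewrite /Lmul /Rmul in hl hr.
  by rewrite [mul a (mul x a)]massoc hr -massoc hl.
- move=> x hx; have [r0 r1] := rp x hx; have [l0 l1] := lp _ r0.
  by split => //; exact: ltrans l1 r1.
Qed.

Lemma ident_pos e : is_identity mul e -> le 0 e.
Proof.
rewrite /is_identity => -[hid ne]; set a := labs join e; set w := a - e.
have a0 : le 0 a := labs_ge0 e.
have w0 : le 0 w by apply: (proj1 (le_sub0 e a)); rewrite /a /labs; case: (ljoin e (- e)) => h _ _.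
have na : `|a| = 1 by rewrite norm_labs.
have ae : a = e + w by rewrite /w addrC subrK.
pose z n := iter n (mul a) a.
have zn : forall n, le 0 (z n - a - w *+ n) /\ `|z n| <= 1.
  elim=> [|n [IH1 IH2]]; first by rewrite /= mulr0n subrr subr0; split; [exact: lrefl|rewrite na].
  have zS : z n.+1 = z n + mul w (z n) by rewrite /z iterS -/(z n) {1}ae mdl (proj1 (hid _)).
  split; last by rewrite zS -/(z n) -zS /z iterS; apply: le_trans (mnorm _ _) _; rewrite na mul1r.
  have wn0 : le 0 (w *+ n).
    elim: n {IH1 IH2 zS} => [|n IHn]; first by rewrite mulr0n; exact: lrefl.
    by rewrite mulrS; have := le_add2 w0 IHn; rewrite addr0.
  have za : le 0 (z n - a) by have := le_add2 IH1 wn0; rewrite add0r subrK.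
  have mwa : mul w a = w + mul w w by rewrite {1}ae mdr (proj2 (hid _)).
  have -> : z n.+1 - a - w *+ n.+1 = (z n - a - w *+ n) + mul w (z n - a) + mul w w.
    rewrite zS mulBr mwa mulrSr; set u := mul w (z n); set v := mul w w.
    exact: zid.
  by have := le_add2 (le_add2 IH1 (mpos w0 za)) (mpos w0 w0); rewrite !addr0.
have [n hn] : exists n : nat, `|w| *+ n > 1 \/ w = 0.
  case: (eqVneq w 0) => [->|wn]; first by exists 0%N; right.
  have nw : 0 < `|w| by rewrite normr_gt0.
  exists (Num.bound (`|w|^-1)); left.
  have hi : 0 <= `|w|^-1 by rewrite invr_ge0 normr_ge0.
  have := archi_boundP hi.
  move=> h; have key : `|w| * `|w|^-1 < `|w| * (Num.bound (`|w|^-1))%:R by rewrite ltr_pM2l.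
  by rewrite mulfV ?normr_eq0 // mulr_natr in key.
case: hn => [hn|w00]; last first.
  by rewrite -(subrK e a) -/w w00 add0r in a0.
have [h1 h2] := zn n.
have wz : le (w *+ n) (z n) by apply: (proj2 (le_sub0 _ _)); have := le_add2 h1 a0; rewrite addr0 -addrA [- _ + a]addrC addrA subrK.
have wn0 : le 0 (w *+ n).
  elim: n {hn h1 h2 wz} => [|n IHn]; first by rewrite mulr0n; exact: lrefl.
  by rewrite mulrS; have := le_add2 w0 IHn; rewrite addr0.
have := le_trans (norm_mono wn0 wz) h2; rewrite normrMn => h.
by have := lt_le_trans hn h; rewrite ltxx.
Qed.

Lemma BPl_OI e : is_identity mul e -> BPl le mul = OI le mul e.
Proof.
move=> he; have e0 := @ident_pos e he; move: he; rewrite /is_identity => -[hid _].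
apply/seteqP; split => p.
- move=> [p0 [_ _ hi hp]]; have pp : mul p p = p.
    by have := hi e; rewrite /Lmul (proj2 (hid p)).
  split => //; split => //.
  by have := (hp e e0).2; rewrite /Lmul (proj2 (hid p)).
- move=> [pp [p0 pe]]; split => //; split.
  + by move=> x y; rewrite /Lmul mdr.
  + by move=> c x; rewrite /Lmul msr.
  + by move=> x; rewrite /Lmul massoc pp.
  + move=> x x0; split; first exact: mpos.
    apply: (proj2 (le_sub0 _ _)); rewrite /Lmul.
    have -> : x - mul p x = mul (e - p) x by rewrite mulBl (proj1 (hid x)).
    by apply: mpos => //; apply: (proj1 (le_sub0 _ _)).
Qed.

Lemma BPr_OI e : is_identity mul e -> BPr le mul = OI le mul e.
Proof.
move=> he; have e0 := @ident_pos e he; move: he; rewrite /is_identity => -[hid _].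
apply/seteqP; split => p.
- move=> [p0 [_ _ hi hp]]; have pp : mul p p = p.
    by have := hi e; rewrite /Rmul (proj1 (hid p)).
  split => //; split => //.
  by have := (hp e e0).2; rewrite /Rmul (proj1 (hid p)).
- move=> [pp [p0 pe]]; split => //; split.
  + by move=> x y; rewrite /Rmul mdl.
  + by move=> c x; rewrite /Rmul msl.
  + by move=> x; rewrite /Rmul -massoc pp.
  + move=> x x0; split; first exact: mpos.
    apply: (proj2 (le_sub0 _ _)); rewrite /Rmul.
    have -> : x - mul x p = mul x (e - p) by rewrite mulBr (proj2 (hid x)).
    by apply: mpos => //; apply: (proj1 (le_sub0 _ _)).
Qed.
End S.

Theorem mainTheorem18 (R : realType) (V : completeNormedModType R)
  (le : V -> V -> Prop) (join : V -> V -> V) (mul : V -> V -> V) :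
  banach_lattice_algebra le join mul ->
  [/\ BPl le mul `&` BPr le mul `<=` BP le mul,
      closed (BP le mul), closed (BPl le mul), closed (BPr le mul) &
      forall e : V, is_identity mul e ->
        [/\ BPl le mul = OI le mul e, OI le mul e = BPr le mul &
            OI le mul e `<=` BP le mul]].
Proof.
move=> H; split.
- exact: BPlr_sub H.
- exact: BP_closed H.
- exact: BPl_closed H.
- exact: BPr_closed H.
- move=> e he.
  have bl := @BPl_OI R V le join mul H e he.
  have br := @BPr_OI R V le join mul H e he.
  split; [exact: bl | by rewrite br | ].
  move=> p hp; apply: (@BPlr_sub R V le join mul H); split.
  + by rewrite bl.
  + by rewrite br.
Qed.
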